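(* Assume every $f_i$ ($i=1,\dots,q$) and every $g_j$ ($j=1,\dots,m$) is Lipschitz continuous with respect to the continuous variables. Let $x^\star\in\mathcal F$ be a local Pareto optimum of problem (P). Assume that there exists a direction $d\in D^c(x^\star)$ such that, for every $j\in\{1,\dots,m\}$ with $g_j(x^\star)=0$, $$(\xi^{g_j})^\top d<0\quad\text{for all }\xi^{g_j}\in\partial_c g_j(x^\star).$$ Then $x^\star$ is a Pareto stationary point of problem (P).
   Context: Fix integers $n,q\ge 1$ and $m\ge 0$. Let $\{1,\dots,n\}=I^c\cup I^z$ with $I^c\cap I^z=\emptyset$ and $I^c,I^z\neq\emptyset$. For $x\in\mathbb R^n$ write $x_c=(x_i)_{i\in I^c}$ and $x_z=(x_i)_{i\in I^z}$. Let $l,u\in\mathbb R^n$ with $l_i<u_i$ for all $i$ and $l_i,u_i\in\mathbb Z$ for $i\in I^z$. Put $X=\{x\in\mathbb R^n: l_i\le x_i\le u_i,\ i=1,\dots,n\}$ and $\mathcal Z=\{x\in\mathbb R^n: x_i\in\mathbb Z \text{ for } i\in I^z\}$. Let $f_1,\dots,f_q,g_1,\dots,g_m:\mathbb R^n\to\mathbb R$ and $F=(f_1,\dots,f_q)^\top$. Problem (P) is: minimize $F(x)$ subject to $g_j(x)\le 0$ ($j=1,\dots,m$), $x\in X\cap\mathcal Z$; its feasible set is $\mathcal F=\{x\in X\cap\mathcal Z: g_j(x)\le 0,\ j=1,\dots,m\}$. A function $h:\mathbb R^n\to\mathbb R$ is Lipschitz continuous with respect to the continuous variables if there is $L_h$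 with $|h(x)-h(y)|\le L_h\|x-y\|$ for all $x,y\in\mathbb R^n$ with $x_i=y_i$ for all $i\in I^z$. For such $h$, $x\in\mathbb R^n$ and $s\in\mathbb R^n$ with $s_i=0$ for $i\in I^z$, the generalized directional derivative is $h^{Cl}_c(x;s)=\limsup_{y_c\to x_c,\ y_z=x_z,\ t\downarrow 0}\frac{h(y+ts)-h(y)}{t}$, and the generalized gradient with respect to the continuous variables is $\partial_c h(x)=\{v\in\mathbb R^n: v_i=0\ \forall i\in I^z,\ h^{Cl}_c(x;s)\ge s^\top v\ \forall s\in\mathbb R^n \text{ with } s_i=0\ \forall i\in I^z\}$. For $x\in X\cap\mathcal Z$, the cone of feasible continuous directions is $D^c(x)=\{s\in\mathbb R^n: s_i=0\ (i\in I^z);\ s_i\ge 0\ (i\in I^c,\ x_i=l_i);\ s_i\le 0\ (i\in I^c,\ x_i=u_i);\ s_i\in\mathbb R\ (i\in I^c,\ l_i<x_i<u_i)\}$. Vector order: for $a,b\in\mathbb R^q$, $a\le b$ means $a_i\le b_i$ for all $i$ and $a\ne b$. For $x\in X\cap\mathcal Z$, the set of feasible primitive directions is $D^z(x)=\{d\in\mathbb Z^n: d_i=0\ \forall i\in I^c,\ \gcd\{d_i: i\in I^z\}=1,\ x+d\in X\cap\mathcal Z\}$; the discrete neighborhood is $\mathcal B^z(x)=\{x+d: d\in D^z(x)\}$, and for $\rho>0$ the continuous neighborhood is $\mathcal B^c(x;\rho)=\{y\in X: y_z=x_z,\ \|y_c-x_c\|\le\rho\}$. A point $x^\star\in\mathcal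 F$ is a local Pareto optimum of (P) if (1) there is no $y\in\mathcal B^z(x^\star)\cap\mathcal F$ with $F(y)\le F(x^\star)$, and (2) for some $\rho>0$ there is no $y\in\mathcal B^c(x^\star;\rho)\cap\mathcal F$ with $F(y)\le F(x^\star)$. A point $x^\star\in\mathcal F$ is Pareto-Clarke stationary w.r.t. the continuous variables for (P) if there exist $\sigma\in\mathbb R^q$ with $\sigma\ge 0$ componentwise and $\sigma\ne 0$, and $\lambda\in\mathbb R^m$ with $\lambda_j\ge0$ and $\lambda_j g_j(x^\star)=0$ for all $j$, and a vector $\bar\xi\in\sum_{i=1}^q\sigma_i\partial_c f_i(x^\star)+\sum_{j=1}^m\lambda_j\partial_c g_j(x^\star)$ (Minkowski sum) such that $\bar\xi^\top d\ge 0$ for every $d\in D^c(x^\star)$. A point $x^\star\in\mathcal F$ is Pareto stationary for (P) if it is Pareto-Clarke stationary w.r.t. the continuous variables and satisfies condition (1) of local Pareto optimality (no $y\in\mathcal B^z(x^\star)\cap\mathcal F$ with $F(y)\le F(x^\star)$). *)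

(* Defs.v *)
From HB Require Import structures.
From mathcomp Require Import all_boot all_order all_algebra.
From mathcomp Require Import reals.
Set Implicit Arguments. Unset Strict Implicit. Unset Printing Implicit Defensive.
Import Order.TTheory GRing.Theory Num.Theory.
Local Open Scope ring_scope.

Section Defs.
Variables (R : realType) (n : nat).
Implicit Types (x y s v l u : 'I_n -> R) (Iz : {set 'I_n}).

Definition vnorm x : R := Num.sqrt (\sum_(i < n) x i ^+ 2).
Definition vdot x y : R := \sum_(i < n) x i * y i.
Definition vadd x y : 'I_n -> R := fun i => x i + y i.
Definition vsub x y : 'I_n -> R := fun i => x i - y i.
Definition vscale (a : R) x : 'I_n -> R := fun i => a * x i.

Definition same_z Iz x y : Prop := forall i, i \in Iz -> x i = y i.
Definition cont_dir Iz s : Prop := forall i, i \in Iz -> s i = 0.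

Definition lipschitz_c Iz (h : ('I_n -> R) -> R) : Prop :=
  exists L : R, forall x y, same_z Iz x y -> `|h x - h y| <= L * vnorm (vsub x y).

(* "h^Cl_c(x;s) >= c", i.e. limsup_{y_c -> x_c, y_z = x_z, t \downarrow 0}
   (h(y+ts)-h(y))/t >= c, with the limsup unfolded: every neighbourhood
   contains quotient values exceeding c - eps. *)
Definition clarke_ge Iz (h : ('I_n -> R) -> R) x s (c : R) : Prop :=
  forall eps delta : R, 0 < eps -> 0 < delta ->
    exists y (t : R), [/\ same_z Iz y x, vnorm (vsub y x) < delta, 0 < t, t < delta &
      c - eps < (h (vadd y (vscale t s)) - h y) / t].

Definition gen_grad_c Iz (h : ('I_n -> R) -> R) x v : Prop :=
  cont_dir Iz v /\ forall s, cont_dir Iz s -> clarke_ge Iz h x s (vdot s v).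

Definition in_box l u x : Prop := forall i, l i <= x i <= u i.
Definition int_on Iz x : Prop := forall i, i \in Iz -> exists z : int, x i = z%:~R.

Definition feasible Iz l u m (g : 'I_m -> ('I_n -> R) -> R) x : Prop :=
  [/\ in_box l u x, int_on Iz x & forall j, g j x <= 0].

Definition Dc Iz l u x s : Prop :=
  cont_dir Iz s /\
  forall i, i \notin Iz ->
    (x i = l i -> 0 <= s i) /\ (x i = u i -> s i <= 0).

Definition Dz Iz l u x (d : 'I_n -> int) : Prop :=
  [/\ forall i, i \notin Iz -> d i = 0,
      \big[gcdz/0]_(i in Iz) d i = 1 &
      in_box l u (fun i => x i + (d i)%:~R) /\
      int_on Iz (fun i => x i + (d i)%:~R)].

Definition Bz Iz l u x y : Prop :=
  exists d, Dz Iz l u x d /\ y = (fun i => x i + (d i)%:~R).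

Definition Bc Iz l u x (rho : R) y : Prop :=
  [/\ in_box l u y, same_z Iz y x & vnorm (vsub y x) <= rho].

End Defs.

Definition vle (R : realType) q (a b : 'I_q -> R) : Prop :=
  (forall i, a i <= b i)%R /\ a <> b.

Section Opt.
Local Open Scope ring_scope.
Variables (R : realType) (n q m : nat) (Iz : {set 'I_n}) (l u : 'I_n -> R)
  (F : 'I_q -> ('I_n -> R) -> R) (g : 'I_m -> ('I_n -> R) -> R).

Definition Fval (x : 'I_n -> R) : 'I_q -> R := fun i => F i x.

Definition no_better_discrete (xs : 'I_n -> R) : Prop :=
  ~ exists y, Bz Iz l u xs y /\ feasible Iz l u g y /\ vle (Fval y) (Fval xs).

Definition local_pareto_opt (xs : 'I_n -> R) : Prop :=
  [/\ feasible Iz l u g xs,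
      no_better_discrete xs &
      exists rho : R, 0 < rho /\
        ~ exists y, Bc Iz l u xs rho y /\ feasible Iz l u g y /\ vle (Fval y) (Fval xs)].

Definition pareto_clarke_stationary (xs : 'I_n -> R) : Prop :=
  feasible Iz l u g xs /\
  exists (sigma : 'I_q -> R) (lam : 'I_m -> R),
    [/\ forall i, 0 <= sigma i,
        sigma <> (fun _ => 0),
        forall j, 0 <= lam j /\ lam j * g j xs = 0 &
        exists (vf : 'I_q -> 'I_n -> R) (vg : 'I_m -> 'I_n -> R),
          [/\ forall i, gen_grad_c Iz (F i) xs (vf i),
              forall j, gen_grad_c Iz (g j) xs (vg j) &
              let xi := fun k => \sum_(i < q) sigma i * vf i k
                               + \sum_(j < m) lam j * vg j k in
              forall d, Dc Iz l u xs d -> 0 <= vdot xi d]].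

Definition pareto_stationary (xs : 'I_n -> R) : Prop :=
  pareto_clarke_stationary xs /\ no_better_discrete xs.

End Opt.

(* Main.v *)
Require Import Defs.
From mathcomp Require Import all_boot all_order all_algebra.
From mathcomp Require Import reals.
Import Order.TTheory GRing.Theory Num.Theory.
Local Open Scope ring_scope.
From mathcomp Require classical_sets boolp ring lra.

Module Aux.
Import classical_sets boolp ring lra.
Local Set Implicit Arguments. Local Unset Strict Implicit. Local Unset Printing Implicit Defensive.

Section Norms.
Variables (R : realType) (n : nat).
Implicit Types (x y v w s : 'I_n -> R).

Definition n1 v : R := \sum_(i < n) `|v i|.

Lemma n1_ge0 v : 0 <= n1 v.
Proof. by apply: sumr_ge0 => i _; exact: normr_ge0. Qed.

Lemma vnorm_ge0 v : 0 <= vnorm v.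
Proof. exact: sqrtr_ge0. Qed.

Lemma abs_le_vnorm v i : `|v i| <= vnorm v.
Proof.
rewrite /vnorm -sqrtr_sqr ler_sqrt; last by apply: sumr_ge0 => j _; exact: sqr_ge0.
rewrite (bigD1 i) //= lerDl; apply: sumr_ge0 => j _; exact: sqr_ge0.
Qed.

Lemma vnorm_le_n1 v : vnorm v <= n1 v.
Proof.
have h0 := n1_ge0 v.
rewrite /vnorm -(ger0_norm h0) -sqrtr_sqr ler_sqrt; last exact: sqr_ge0.
rewrite expr2 /n1 mulr_suml; apply: ler_sum => i _.
rewrite -[v i ^+ 2]real_normK ?num_real // expr2 ler_wpM2l //.
rewrite (bigD1 i) //= lerDl; apply: sumr_ge0 => j _; exact: normr_ge0.
Qed.

Lemma n1_le_vnorm v : n1 v <= n%:R * vnorm v.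
Proof.
have -> : n%:R * vnorm v = \sum_(i < n) vnorm v by rewrite sumr_const card_ord mulr_natl.
rewrite /n1; apply: ler_sum => i _.
exact: abs_le_vnorm.
Qed.

Lemma vnorm_scale a v : vnorm (vscale a v) = `|a| * vnorm v.
Proof.
rewrite /vnorm /vscale.
under eq_bigr do rewrite exprMn.
rewrite -mulr_sumr sqrtrM ?sqrtr_sqr //; exact: sqr_ge0.
Qed.

Lemma vnorm0 v : (forall i, v i = 0) -> vnorm v = 0.
Proof.
move=> h; rewrite /vnorm big1 ?sqrtr0 // => i _; by rewrite h expr2 mulr0.
Qed.

Lemma n1_add v w : n1 (vadd v w) <= n1 v + n1 w.
Proof. rewrite /n1 -big_split /=; apply: ler_sum => i _; exact: ler_normD. Qed.

End Norms.


Section Clarke.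
Variables (R : realType) (n : nat) (Iz : {set 'I_n}) (h : ('I_n -> R) -> R)
  (xs : 'I_n -> R) (L : R).
Hypothesis hL : forall x y, same_z Iz x y -> `|h x - h y| <= L * vnorm (vsub x y).
Implicit Types (x y v w s : 'I_n -> R).

Definition quot s y t := (h (vadd y (vscale t s)) - h y) / t.

Lemma vsub_addK y t s : vsub (vadd y (vscale t s)) y = vscale t s.
Proof. by apply: funext => i; rewrite /vsub /vadd addrAC subrr add0r. Qed.

Lemma same_z_add y t s : cont_dir Iz s -> same_z Iz (vadd y (vscale t s)) y.
Proof. by move=> cs i hi; rewrite /vadd /vscale cs // mulr0 addr0. Qed.

Lemma quot_le s y t : cont_dir Iz s -> 0 < t -> `|quot s y t| <= L * vnorm s.
Proof.
move=> cs t0; rewrite /quot normrM normfV (gtr0_norm t0) ler_pdivrMr //.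
apply: le_trans (hL (same_z_add y t cs)) _.
by rewrite vsub_addK vnorm_scale (gtr0_norm t0) mulrA mulrAC.
Qed.

Notation CG := (clarke_ge Iz h xs).

Lemma CG_lower s : cont_dir Iz s -> CG s (- (L * vnorm s)).
Proof.
move=> cs eps del e0 d0; exists xs, (del / 2); split.
- by [].
- by rewrite vnorm0 // => i; rewrite /vsub subrr.
- by rewrite divr_gt0.
- by rewrite ltr_pdivrMr // ltr_pMr // ltr1n.
- have := quot_le xs cs (divr_gt0 d0 (ltr0n _ 2)); rewrite ler_norml => /andP[h1 _].
  by apply: lt_le_trans h1; rewrite ltrBlDr ltrDl.
Qed.

Lemma CG_upper s c : cont_dir Iz s -> CG s c -> c <= L * vnorm s.
Proof.
move=> cs hc; rewrite leNgt; apply/negP => hlt.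
have e0 : 0 < (c - L * vnorm s) / 2 by rewrite divr_gt0 // subr_gt0.
have [y [t [_ _ t0 _ hq]]] := hc _ 1 e0 ltr01.
have := quot_le y cs t0; rewrite ler_norml => /andP[_ h2].
have : c - (c - L * vnorm s) / 2 < L * vnorm s by apply: lt_le_trans hq h2.
move: hlt; set Lv := L * vnorm s; lra.
Qed.

Lemma CG_down s c c' : c' <= c -> CG s c -> CG s c'.
Proof.
move=> hc H eps del e0 d0; have [y [t [a1 a2 a3 a4 a5]]] := H eps del e0 d0.
exists y, t; split => //; apply: le_lt_trans a5; by rewrite lerD2r.
Qed.

Definition pc s := sup [set c | CG s c].

Lemma pc_hassup s : cont_dir Iz s -> has_sup [set c | CG s c].
Proof.
move=> cs; split; first by exists (- (L * vnorm s)); exact: CG_lower.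
by exists (L * vnorm s) => c hc; exact: CG_upper.
Qed.

Lemma CG_pc s c : cont_dir Iz s -> CG s c <-> c <= pc s.
Proof.
move=> cs; split => [hc|hc]; first exact: (sup_upper_bound (pc_hassup cs)).
move=> eps del e0 d0.
have e2 : 0 < eps / 2 by rewrite divr_gt0.
have [e he hlt] := sup_adherent e2 (pc_hassup cs).
have [y [t [a1 a2 a3 a4 a5]]] := he _ _ e2 d0.
exists y, t; split => //; move: a5 hlt hc; set Q := (h _ - h y) / t; rewrite -/(pc s); lra.
Qed.

Lemma pc_le s : cont_dir Iz s -> pc s <= L * vnorm s.
Proof. by move=> cs; apply: (CG_upper cs); apply/(CG_pc _ cs). Qed.

Lemma pc_upper s c : cont_dir Iz s -> pc s < c ->
  exists del, 0 < del /\ forall y t, same_z Iz y xs -> vnorm (vsub y xs) < del ->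
    0 < t -> t < del -> quot s y t < c.
Proof.
move=> cs hlt.
have : ~ CG s c by move/(CG_pc _ cs); rewrite leNgt hlt.
move=> /existsNP [eps /existsNP [del /not_implyP [e0 /not_implyP [d0 H]]]].
exists del; split => // y t a1 a2 a3 a4.
have : ~ (c - eps < quot s y t) by move=> hq; apply: H; exists y, t; split.
move/negP; rewrite -leNgt => hq; apply: le_lt_trans hq _; by rewrite ltrBlDr ltrDl.
Qed.


Lemma cont_dir_scale (a : R) s : cont_dir Iz s -> cont_dir Iz (vscale a s).
Proof. by move=> cs i hi; rewrite /vscale cs // mulr0. Qed.

Lemma cont_dir_add (a b : 'I_n -> R) : cont_dir Iz a -> cont_dir Iz b -> cont_dir Iz (vadd a b).
Proof. by move=> ca cb i hi; rewrite /vadd ca // cb // addr0. Qed.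

Lemma CG_scale s c (a : R) : 0 < a -> CG s c -> CG (vscale a s) (a * c).
Proof.
move=> a0 H eps del e0 d0.
have ad0 : 0 < a * del by rewrite mulr_gt0.
have md0 : 0 < Order.min del (a * del) by rewrite lt_min d0 ad0.
have [y [t [a1 a2 a3 a4 a5]]] := H (eps / a) (Order.min del (a * del))
  (divr_gt0 e0 a0) md0.
move: a2 a4; rewrite !lt_min => /andP[a2 _] /andP[_ a4].
exists y, (t / a); split => //.
- by rewrite divr_gt0.
- by rewrite ltr_pdivrMr // mulrC.
- have -> : vadd y (vscale (t / a) (vscale a s)) = vadd y (vscale t s).
    by apply: funext => i; rewrite /vadd /vscale mulrA divfK // gt_eqF.
  move: a5; rewrite invf_div -(ltr_pM2l a0).
  have an : a != 0 by rewrite gt_eqF.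
  set X := (h _ - h y); move=> a5.
  have -> : a * c - eps = a * (c - eps / a) by rewrite mulrBr mulrCA divff // mulr1.
  by rewrite mulrCA.
Qed.

Lemma pc_hom s (a : R) : cont_dir Iz s -> 0 < a -> pc (vscale a s) = a * pc s.
Proof.
move=> cs a0; have cas := cont_dir_scale a cs.
apply/eqP; rewrite eq_le; apply/andP; split; last first.
  by apply/(CG_pc _ cas); apply: CG_scale => //; apply/(CG_pc _ cs).
have ai : 0 < a^-1 by rewrite invr_gt0.
have := CG_scale ai (iffRL (CG_pc _ cas) (lexx (pc (vscale a s)))).
have -> : vscale a^-1 (vscale a s) = s.
  by apply: funext => i; rewrite /vscale mulrA mulVf ?gt_eqF // mul1r.
by move/(CG_pc _ cs); rewrite -(ler_pM2l a0) mulrA divff ?gt_eqF // mul1r.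
Qed.

Lemma pc_sub (a b : 'I_n -> R) : cont_dir Iz a -> cont_dir Iz b -> pc (vadd a b) <= pc a + pc b.
Proof.
move=> ca cb; have cab := cont_dir_add ca cb.
rewrite leNgt; apply/negP => hlt.
set e := (pc (vadd a b) - (pc a + pc b)) / 3%:R.
have e0 : 0 < e by rewrite divr_gt0 // subr_gt0.
have [da [da0 Ha]] : exists del, 0 < del /\ forall y t, same_z Iz y xs -> vnorm (vsub y xs) < del ->
    0 < t -> t < del -> quot a y t < pc a + e by apply: pc_upper; rewrite ?ltrDl.
have [db [db0 Hb]] : exists del, 0 < del /\ forall y t, same_z Iz y xs -> vnorm (vsub y xs) < del ->
    0 < t -> t < del -> quot b y t < pc b + e by apply: pc_upper; rewrite ?ltrDl.
set K := n%:R + n1 a + 1.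
have K0 : 0 < K by rewrite /K ltr_wpDl // addr_ge0 // n1_ge0.
set d := Order.min da (Order.min db (db / K)).
have d0 : 0 < d by rewrite !lt_min da0 db0 divr_gt0.
have hc : CG (vadd a b) (pc (vadd a b)) by apply/(CG_pc _ cab).
have [y [t [a1 a2 a3 a4 a5]]] := hc e d e0 d0.
move: a2 a4; rewrite !lt_min => /and3P[a2 a2' a2''] /and3P[a4 a4' a4''].
have q1 := Ha y t a1 a2 a3 a4.
set y' := vadd y (vscale t a).
have sz : same_z Iz y' xs by move=> i hi; rewrite /y' (same_z_add y t ca) // a1.
have ny : vnorm (vsub y' xs) < db.
  apply: le_lt_trans (vnorm_le_n1 _) _.
  have -> : vsub y' xs = vadd (vsub y xs) (vscale t a).
    by apply: funext => i; rewrite /vsub /vadd /y' addrAC.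
  apply: le_lt_trans (n1_add _ _) _.
  have -> : n1 (vscale t a) = t * n1 a.
    by rewrite /n1 mulr_sumr; apply: eq_bigr => i _; rewrite /vscale normrM gtr0_norm.
  apply: le_lt_trans (lerD (n1_le_vnorm _) (lexx _)) _.
  set D := db / K; set v := vnorm (vsub y xs).
  have D0 : 0 < D by rewrite divr_gt0.
  have h1 : n%:R * v <= n%:R * D by rewrite ler_wpM2l // ltW.
  have h2 : t * n1 a <= D * n1 a by rewrite ler_wpM2r ?n1_ge0 // ltW.
  have h3 : D * n%:R + D * n1 a + D = db.
    by rewrite /D -mulrDr -[X in _ + X]mulr1 -mulrDr divfK // gt_eqF.
  move: h1 h2 h3 D0; rewrite [n%:R * D]mulrC; lra.
have q2 := Hb y' t sz ny a3 a4'.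
move: a5 q1 q2; rewrite /quot /y'.
have -> : vadd y (vscale t (vadd a b)) = vadd (vadd y (vscale t a)) (vscale t b).
  by apply: funext => i; rewrite /vadd /vscale mulrDr addrA.
set A := h (vadd (vadd y (vscale t a)) (vscale t b)); set B := h (vadd y (vscale t a)).
rewrite -[(A - h y) / t](_ : (A - B) / t + (B - h y) / t = _); last first.
  by rewrite -mulrDl addrA subrK.
move: e0; rewrite /e; lra.
Qed.

End Clarke.


Arguments pc_hom [R n Iz h xs L] hL [s a].
Arguments pc_sub [R n Iz h xs L] hL [a b].
Arguments pc_le [R n Iz h xs L] hL [s].
Arguments CG_pc [R n Iz h xs L] hL [s c].

Definition near0 (R : realType) (P : R -> Prop) :=
  exists del : R, 0 < del /\ forall t, 0 < t -> t < del -> P t.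

Lemma sum_delta (R : realType) (I : finType) (f : I -> R) (k : I) (a : R) :
  \sum_(j : I) f j * (if j == k then a else 0) = f k * a.
Proof.
rewrite (bigD1 k) //= eqxx big1 ?addr0 // => j /negbTE ->; by rewrite mulr0.
Qed.

Section Ext.
Variables (R : realType) (n : nat) (Iz : {set 'I_n}) (h : ('I_n -> R) -> R)
  (xs : 'I_n -> R) (L : R).
Hypothesis hL : forall x y, same_z Iz x y -> `|h x - h y| <= L * vnorm (vsub x y).
Implicit Types (x y v w s : 'I_n -> R).

Definition projz s : 'I_n -> R := fun i => if i \in Iz then 0 else s i.

Lemma cont_dir_projz s : cont_dir Iz (projz s).
Proof. by move=> i hi; rewrite /projz hi. Qed.

Lemma projz_id s : cont_dir Iz s -> projz s = s.
Proof. by move=> cs; apply: funext => i; rewrite /projz; case: ifP => // /cs ->. Qed.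

Definition PP s := pc Iz h xs (projz s).

Lemma pc0 : pc Iz h xs (fun _ => 0) = 0.
Proof.
have c0 : cont_dir Iz (fun _ : 'I_n => 0 : R) by [].
have := pc_hom (xs:=xs) hL c0 (ltr0n R 2).
have -> : vscale 2 (fun _ : 'I_n => 0 : R) = (fun _ => 0).
  by apply: funext => i; rewrite /vscale mulr0.
lra.
Qed.

Lemma PP0 s : (forall i, i \notin Iz -> s i = 0) -> PP s = 0.
Proof.
move=> hs; rewrite /PP -pc0; congr pc; apply: funext => i.
by rewrite /projz; case: ifP => // /negbT /hs.
Qed.

Lemma PP_hom s (a : R) : 0 < a -> PP (vscale a s) = a * PP s.
Proof.
move=> a0; rewrite /PP -(pc_hom hL (cont_dir_projz s) a0).
congr pc; apply: funext => i; rewrite /projz /vscale; case: ifP => //; by rewrite mulr0.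
Qed.

Lemma PP_sub (a b : 'I_n -> R) : PP (vadd a b) <= PP a + PP b.
Proof.
rewrite /PP; apply: le_trans (pc_sub hL (cont_dir_projz a) (cont_dir_projz b)).
rewrite le_eqVlt; apply/orP; left; apply/eqP; congr pc; apply: funext => i.
by rewrite /projz /vadd; case: ifP => //; rewrite addr0.
Qed.

Lemma PP_bound s : 0 <= L -> PP s <= L * n1 s.
Proof.
move=> L0; apply: le_trans (pc_le hL (cont_dir_projz s)) _.
apply: ler_wpM2l => //; apply: le_trans (vnorm_le_n1 _) _.
apply: ler_sum => i _; rewrite /projz; case: ifP => _; by rewrite ?normr0 ?normr_ge0.
Qed.

Lemma PP_dom v : (forall s, \sum_i v i * s i <= PP s) -> gen_grad_c Iz h xs v.
Proof.
move=> H; split.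
  move=> i hi; have h1 := H (fun j => if j == i then 1 else 0).
  have h2 := H (fun j => if j == i then -1 else 0).
  have z : forall c : R, PP (fun j => if j == i then c else 0) = 0.
    by move=> c; apply: PP0 => j hj; case: eqP => // ji; rewrite ji hi in hj.
  rewrite !sum_delta !z in h1 h2; move: h1 h2; lra.
move=> s cs; apply/(CG_pc hL cs); rewrite -[s in pc _ _ _ s](projz_id cs).
apply: le_trans (H s); rewrite /vdot le_eqVlt; apply/orP; left; apply/eqP.
by apply: eq_bigr => i _; rewrite mulrC.
Qed.

Lemma PP_decr d : cont_dir Iz d -> PP d < 0 ->
  near0 (fun t => h (vadd xs (vscale t d)) < h xs).
Proof.
move=> cd; rewrite /PP projz_id // => hlt.
have [del [d0 H]] := pc_upper hL cd hlt.
exists del; split => // t t0 tl.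
have := H xs t (fun i _ => erefl) _ t0 tl.
rewrite vnorm0 => [/(_ d0)|]; last by move=> i; rewrite /vsub subrr.
rewrite /quot pmulr_llt0 ?invr_gt0 //; lra.
Qed.

End Ext.


Section HahnB.
Variables (R : realType) (T : finType) (Q : (T -> R) -> R).
Hypothesis Qsub : forall w w', Q (fun i => w i + w' i) <= Q w + Q w'.
Hypothesis Qhom : forall w (a : R), 0 < a -> Q (fun i => a * w i) = a * Q w.

Definition dotT (La w : T -> R) := \sum_i La i * w i.

Lemma dotT_add La w w' : dotT La (fun i => w i + w' i) = dotT La w + dotT La w'.
Proof. by rewrite /dotT -big_split; apply: eq_bigr => i _; rewrite mulrDr. Qed.

Lemma dotT_scale La w (a : R) : dotT La (fun i => a * w i) = a * dotT La w.
Proof. by rewrite /dotT mulr_sumr; apply: eq_bigr => i _; rewrite mulrCA. Qed.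

Lemma HB (S : pred T) (lam : T -> R) :
  (forall w, (forall i, ~~ S i -> w i = 0) -> dotT lam w <= Q w) ->
  exists La, (forall i, S i -> La i = lam i) /\ forall w, dotT La w <= Q w.
Proof.
move=> hlam.
suff H : forall s : seq T, exists La, (forall i, S i -> La i = lam i) /\
  forall w, (forall i, ~~ S i -> i \notin s -> w i = 0) -> dotT La w <= Q w.
  have [La [h1 h2]] := H (enum T); exists La; split => // w; apply: h2 => i _.
  by rewrite mem_enum.
elim => [|i s [La [hS hQ]]].
  by exists lam; split => // w hw; apply: hlam => j hj; exact: hw.
case: (boolP (S i || (i \in s))) => [his | hn].
  exists La; split => // w hw; apply: hQ => j hj hjs; apply: hw => //.
  rewrite inE negb_or hjs andbT; apply/eqP => ji; rewrite -ji in his.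
  by rewrite (negbTE hj) (negbTE hjs) in his.
move: hn; rewrite negb_or => /andP[nSi nis].
pose G (w : T -> R) := forall j, ~~ S j -> j \notin s -> w j = 0.
have Gi : forall w, G w -> w i = 0 by move=> w /(_ i nSi nis).
have Gadd : forall w w', G w -> G w' -> G (fun j => w j + w' j).
  by move=> w w' h1 h2 j a b; rewrite h1 // h2 // addr0.
have Gscale : forall w (a : R), G w -> G (fun j => a * w j).
  by move=> w a h1 j a1 b; rewrite h1 // mulr0.
have G0 : G (fun _ => 0) by [].
pose e : T -> R := fun j => if j == i then 1 else 0.
have key : forall u w, G u -> G w ->
    dotT La u - Q (fun j => u j - e j) <= Q (fun j => w j + e j) - dotT La w.
  move=> u w Gu Gw.
  have h1 := hQ _ (Gadd _ _ Gu Gw).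
  have h2 := Qsub (fun j => u j - e j) (fun j => w j + e j).
  have E : (fun j => u j - e j + (w j + e j)) = (fun j => u j + w j).
    by apply: funext => j; ring.
  rewrite E in h2.
  move: h1 h2; rewrite dotT_add; lra.
pose A : set R := fun x => exists u, G u /\ x = dotT La u - Q (fun j => u j - e j).
have Ane : exists x, A x by exists (dotT La (fun _ => 0) - Q (fun j => 0 - e j)); exists (fun _ => 0).
have Aub : ubound A (Q (fun j => 0 + e j) - dotT La (fun _ => 0)).
  by move=> x [u [Gu ->]]; apply: key.
have hA : has_sup A by split => //; exists (Q (fun j => 0 + e j) - dotT La (fun _ => 0)).
pose c := sup A.
have hc1 : forall u, G u -> dotT La u - Q (fun j => u j - e j) <= c.
  by move=> u Gu; apply: sup_upper_bound => //; exists u.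
have hc2 : forall w, G w -> c <= Q (fun j => w j + e j) - dotT La w.
  by move=> w Gw; apply: ge_sup => // x [u [Gu ->]]; apply: key.
exists (fun j => if j == i then c else La j); split.
  move=> j Sj; case: eqP => [ji|_]; last exact: hS.
  by move: Sj; rewrite ji (negbTE nSi).
move=> w hw.
pose w0 := fun j => if j == i then 0 else w j.
have Gw0 : G w0.
  move=> j a b; rewrite /w0; case: eqP => // /eqP ji; apply: hw => //.
  by rewrite inE negb_or ji.
set r := w i.
have hdot : dotT (fun j => if j == i then c else La j) w = dotT La w0 + c * r.
  rewrite /dotT (bigD1 i) //= [in RHS](bigD1 i) //= !eqxx /w0 eqxx mulr0 add0r addrC.
  congr (_ + _); apply: eq_bigr => j /negbTE ->; by [].
have hw0 : w = (fun j => w0 j + r * e j).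
  apply: funext => j; rewrite /w0 /e; case: eqP => [->|_]; last by rewrite mulr0 addr0.
  by rewrite mulr1 add0r.
rewrite hdot; set D0 := dotT La w0.
case: (ltgtP r 0) => hr.
- pose p := - r; have p0 : 0 < p by rewrite /p oppr_gt0.
  have := hc1 _ (Gscale _ p^-1 Gw0); rewrite dotT_scale.
  have -> : Q w = p * Q (fun j => p^-1 * w0 j - e j).
    rewrite -Qhom // hw0; congr Q; apply: funext => j.
    by rewrite mulrBr mulrA divff ?gt_eqF // mul1r /p mulNr opprK.
  set Q2 := Q _ => hh.
  have := ler_wpM2l (ltW p0) hh; rewrite mulrBr mulrA divff ?gt_eqF // mul1r /p.
  rewrite -/D0 [c * r]mulrC; lra.
- have := hc2 _ (Gscale _ r^-1 Gw0); rewrite dotT_scale.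
  have -> : Q w = r * Q (fun j => r^-1 * w0 j + e j).
    rewrite -Qhom // hw0; congr Q; apply: funext => j.
    by rewrite mulrDr mulrA divff ?gt_eqF // mul1r.
  set Q2 := Q _ => hh.
  have := ler_wpM2l (ltW hr) hh; rewrite mulrBr mulrA divff ?gt_eqF // mul1r.
  rewrite -/D0 [c * r]mulrC; lra.
- have -> : w = w0.
    by rewrite {1}hw0 hr; apply: funext => j; rewrite mul0r addr0.
  rewrite hr mulr0 addr0; exact: hQ.
Qed.

End HahnB.


Lemma near0_and (R : realType) (P P' : R -> Prop) :
  near0 P -> near0 P' -> near0 (fun t => P t /\ P' t).
Proof.
move=> [d1 [d10 H1]] [d2 [d20 H2]]; exists (Order.min d1 d2); split.
  by rewrite lt_min d10 d20.
by move=> t t0; rewrite lt_min => /andP[a b]; split; [exact: H1|exact: H2].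
Qed.

Lemma near0_forall (R : realType) (I : finType) (P : I -> R -> Prop) :
  (forall i, near0 (P i)) -> near0 (fun t => forall i, P i t).
Proof.
move=> H.
suff : forall s : seq I, near0 (fun t => forall i, i \in s -> P i t).
  move/(_ (enum I)) => [d [d0 Hd]]; exists d; split => // t t0 td i.
  by apply: Hd => //; rewrite mem_enum.
elim => [|i s [d [d0 Hd]]]; first by exists 1; split => //.
have [d' [d0' Hd']] := H i.
exists (Order.min d d'); split; first by rewrite lt_min d0 d0'.
move=> t t0; rewrite lt_min => /andP[a b] j; rewrite inE => /orP[/eqP ->|js].
  exact: Hd'.
exact: Hd.
Qed.

Lemma near0_imp (R : realType) (b : bool) (P : R -> Prop) :
  (b -> near0 P) -> near0 (fun t => b -> P t).
Proof.
case: b => H; first by have [d [d0 Hd]] := H erefl; exists d; split => // t t0 td _; exact: Hd.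
by exists 1; split.
Qed.

Lemma near0_lin (R : realType) (a b : R) : 0 <= b -> (a < 0 -> 0 < b) ->
  near0 (fun t => 0 <= b + t * a).
Proof.
move=> b0 hb; case: (leP 0 a) => ha.
  by exists 1; split => // t t0 _; apply: addr_ge0 => //; apply: mulr_ge0 => //; exact: ltW.
have na : 0 < - a by rewrite oppr_gt0.
exists (b / - a); split; first by rewrite divr_gt0 // hb.
move=> t t0; rewrite ltr_pdivlMr // => h; move: h; lra.
Qed.

Section Main.
Variables (R : realType) (n q m : nat) (Iz : {set 'I_n})
  (l u : 'I_n -> R) (F : 'I_q -> ('I_n -> R) -> R) (g : 'I_m -> ('I_n -> R) -> R)
  (xs : 'I_n -> R).
Hypothesis q0 : (0 < q)%N.
Hypothesis hlu : forall i, l i < u i.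

Definition Kt := ('I_q + 'I_m)%type.
Definition hk (k : Kt) := match k with inl i => F i | inr j => g j end.
Definition act (k : Kt) : bool := match k with inl _ => true | inr j => g j xs == 0 end.

Variable Lk : Kt -> R.
Hypothesis hLk0 : forall k, 0 <= Lk k.
Hypothesis hLk : forall k x y, same_z Iz x y -> `|hk k x - hk k y| <= Lk k * vnorm (vsub x y).
Hypothesis hfx : feasible Iz l u g xs.
Hypothesis hloc : exists rho : R, 0 < rho /\
  ~ exists y, Bc Iz l u xs rho y /\ feasible Iz l u g y /\ vle (Fval F y) (Fval F xs).

Definition Pk k s := PP Iz (hk k) xs s.
Definition M := \sum_k Lk k.

Lemma M_ge0 : 0 <= M.
Proof. by apply: sumr_ge0 => k _; exact: hLk0. Qed.

Lemma Pk_bound k s : Pk k s <= M * n1 s.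
Proof.
apply: le_trans (PP_bound xs (hLk k) s (hLk0 k)) _.
apply: ler_wpM2r; first exact: n1_ge0.
rewrite /M (bigD1 k) //= lerDl; apply: sumr_ge0 => j _; exact: hLk0.
Qed.

Definition k0 : Kt := inl (Ordinal q0).

Lemma primal d : Dc Iz l u xs d -> exists k, act k /\ 0 <= Pk k d.
Proof.
move=> hd; apply: contrapT => hne.
have hneg : forall k, act k -> Pk k d < 0.
  move=> k ak; rewrite ltNge; apply/negP => h0; apply: hne; by exists k.
have [cd hdsign] := hd.
have [hbox hint hgx] := hfx.
have [rho [rho0 hrho]] := hloc.
pose y t := vadd xs (vscale t d).
have N1 : near0 (fun t => forall k, act k -> hk k (y t) < hk k xs).
  apply: near0_forall => k; apply: near0_imp => ak.
  exact: (PP_decr (hLk k) cd (hneg k ak)).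
have N2 : near0 (fun t => forall j, ~~ act (inr j) -> g j (y t) <= 0).
  apply: near0_forall => j; apply: near0_imp => /= nj.
  have gneg : g j xs < 0 by rewrite lt_neqAle nj hgx.
  set K := Lk (inr j) * vnorm d + 1.
  have K0 : 0 < K by rewrite /K ltr_wpDl // mulr_ge0 // ?vnorm_ge0.
  exists (- g j xs / K); split; first by rewrite divr_gt0 // oppr_gt0.
  move=> t t0; rewrite ltr_pdivlMr // => ht.
  have := hLk (inr j) (same_z_add xs t cd); rewrite /= vsub_addK vnorm_scale (gtr0_norm t0).
  rewrite ler_norml => /andP[_ h2].
  have h3 : Lk (inr j) * (t * vnorm d) <= t * K - t.
    by rewrite /K mulrDr mulr1 addrK mulrCA.
  move: h2 h3 ht t0; rewrite /y; lra.
have N3 : near0 (fun t => forall i, l i <= y t i <= u i).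
  apply: near0_forall => i.
  have [hli hui] : l i <= xs i /\ xs i <= u i by move/andP: (hbox i).
  have A1 : near0 (fun t => 0 <= (xs i - l i) + t * d i).
    apply: near0_lin; first by rewrite subr_ge0.
    move=> hdi; rewrite subr_gt0 lt_neqAle hli andbT.
    apply/eqP => e; case: (boolP (i \in Iz)) => hi.
      by move: hdi; rewrite cd // ltxx.
    have := (hdsign i hi).1 (esym e); rewrite leNgt hdi.
    by [].
  have A2 : near0 (fun t => 0 <= (u i - xs i) + t * - d i).
    apply: near0_lin; first by rewrite subr_ge0.
    move=> hdi; rewrite subr_gt0 lt_neqAle hui andbT.
    apply/eqP => e; case: (boolP (i \in Iz)) => hi.
      by move: hdi; rewrite cd // oppr0 ltxx.
    have := (hdsign i hi).2 e; rewrite -oppr_ge0 leNgt hdi.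
    by [].
  have [dd [dd0 Hd]] := near0_and A1 A2.
  exists dd; split => // t t0 td; have [a1 a2] := Hd t t0 td.
  rewrite /y /vadd /vscale; apply/andP; split; move: a1 a2; lra.
have N4 : near0 (fun t => vnorm (vsub (y t) xs) <= rho).
  exists (rho / (vnorm d + 1)); split.
    by rewrite divr_gt0 // ltr_wpDl // vnorm_ge0.
  move=> t t0; rewrite ltr_pdivlMr ?ltr_wpDl ?vnorm_ge0 // => ht.
  rewrite /y vsub_addK vnorm_scale gtr0_norm //.
  have := vnorm_ge0 d; move: ht t0; lra.
have [dl [dl0 Hall]] := near0_and (near0_and N1 N2) (near0_and N3 N4).
have t0 : 0 < dl / 2 by rewrite divr_gt0.
have t1 : dl / 2 < dl by rewrite ltr_pdivrMr // ltr_pMr // ltr1n.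
have [[H1 H2] [H3 H4]] := Hall _ t0 t1.
apply: hrho; exists (y (dl / 2)).
have szy : same_z Iz (y (dl / 2)) xs by apply: same_z_add.
have fy : feasible Iz l u g (y (dl / 2)).
  split => //.
  - by move=> i hi; rewrite (szy i hi); exact: hint.
  - move=> j; case: (boolP (act (inr j))) => aj; last exact: H2.
    apply: ltW; rewrite -(eqP aj); exact: (H1 (inr j) aj).
split; first by split.
split => //; split.
  by move=> i; apply: ltW; exact: (H1 (inl i) erefl).
move=> E; have := congr1 (fun f => f (Ordinal q0)) E; rewrite /Fval /=.
by move/eqP; rewrite lt_eqF //; exact: (H1 (inl (Ordinal q0)) erefl).
Qed.


Definition pn i (z : R) : R :=
  if i \in Iz then `|z| else if xs i == l i then (`|z| - z) / 2
  else if xs i == u i then (`|z| + z) / 2 else 0.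
Definition cl i (z : R) : R :=
  if i \in Iz then 0 else if xs i == l i then (z + `|z|) / 2
  else if xs i == u i then (z - `|z|) / 2 else z.
Definition pen (b : 'I_n -> R) := M * \sum_i pn i (b i).

Lemma absf (z : R) : - `|z| <= z /\ z <= `|z|.
Proof. by have := lexx `|z|; rewrite ler_norml => /andP[]. Qed.

Lemma pn_sub i (z z' : R) : pn i (z + z') <= pn i z + pn i z'.
Proof.
have h := ler_normD z z'; have [a1 a2] := absf z; have [b1 b2] := absf z'.
have [c1 c2] := absf (z + z').
rewrite /pn; case: ifP => _; first by [].
case: ifP => _; first by lra.
case: ifP => _; first by lra.
by rewrite addr0.
Qed.

Lemma pn_hom i (a z : R) : 0 < a -> pn i (a * z) = a * pn i z.
Proof.
move=> a0; rewrite /pn normrM (gtr0_norm a0).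
case: ifP => _ //; case: ifP => _; first by rewrite -mulrBr mulrA.
case: ifP => _; first by rewrite -mulrDr mulrA.
by rewrite mulr0.
Qed.

Lemma pen_zero b : (forall i, b i = 0) -> pen b = 0.
Proof.
move=> hb; rewrite /pen big1 ?mulr0 // => i _; rewrite hb /pn normr0 subr0 addr0 mul0r.
by case: ifP => //; case: ifP => //; case: ifP.
Qed.

Lemma pen_Dc s : Dc Iz l u xs s -> pen s = 0.
Proof.
move=> [cs sg]; rewrite /pen big1 ?mulr0 // => i _; rewrite /pn.
case: (boolP (i \in Iz)) => hi; first by rewrite cs // normr0.
case: ifP => [/eqP e|ne].
  by rewrite ger0_norm ?subrr ?mul0r //; apply: (sg i hi).1.
case: ifP => [/eqP e|_] //.
by rewrite ler0_norm ?addNr ?mul0r //; apply: (sg i hi).2.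
Qed.

Lemma clamp_Dc b : Dc Iz l u xs (fun i => cl i (b i)).
Proof.
split; first by move=> i hi; rewrite /cl hi.
move=> i hi; have [a1 a2] := absf (b i); rewrite /cl (negbTE hi); split => e.
  by rewrite e eqxx; lra.
have ne : xs i == l i = false by rewrite e; apply/negbTE; rewrite gt_eqF ?hlu.
by rewrite ne e eqxx; lra.
Qed.

Lemma clamp_diff b i : `|cl i (b i) - b i| <= pn i (b i).
Proof.
have [a1 a2] := absf (b i); rewrite /cl /pn.
case: ifP => _; first by rewrite sub0r normrN.
case: ifP => _; first by rewrite ler_norml; apply/andP; split; lra.
case: ifP => _; first by rewrite ler_norml; apply/andP; split; lra.
by rewrite subrr normr0.
Qed.

Lemma pen_key b : exists k, act k /\ 0 <= Pk k b + pen b.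
Proof.
have [k [ak hk0]] := primal (clamp_Dc b).
exists k; split => //.
have h1 := PP_sub xs (hLk k) b (vsub (fun i => cl i (b i)) b).
have E : vadd b (vsub (fun i => cl i (b i)) b) = (fun i => cl i (b i)).
  by apply: funext => i; rewrite /vadd /vsub addrC subrK.
rewrite E in h1.
have h2 := Pk_bound k (vsub (fun i => cl i (b i)) b).
have h3 : M * n1 (vsub (fun i => cl i (b i)) b) <= pen b.
  apply: ler_wpM2l; first exact: M_ge0.
  by apply: ler_sum => i _; exact: clamp_diff.
move: hk0 h1 h2 h3; rewrite /Pk; lra.
Qed.


Definition Tt := ((Kt * 'I_n) + (Kt + ('I_n + unit)))%type.

Definition mkw (c : Kt -> 'I_n -> R) (r : Kt -> R) (b : 'I_n -> R) (tau : R) : Tt -> R :=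
  fun j => match j with
  | inl p => c p.1 p.2
  | inr (inl k) => r k
  | inr (inr (inl i)) => b i
  | inr (inr (inr _)) => tau end.

Definition BM (f : Kt -> R) := \big[Order.max/f k0]_(k | act k) f k.

Lemma BM_ge f k : act k -> f k <= BM f.
Proof. by move=> ak; exact: le_bigmax_cond. Qed.

Lemma BM_le f X : (forall k, act k -> f k <= X) -> BM f <= X.
Proof. by move=> H; apply: bigmax_le => //; exact: H. Qed.

Definition term (w : Tt -> R) k :=
  Pk k (fun i => w (inl (k, i)) + w (inr (inr (inl i)))) + w (inr (inl k)) + w (inr (inr (inr tt))).

Definition Qb (w : Tt -> R) := BM (term w) + pen (fun i => w (inr (inr (inl i)))).

Lemma Qb_mkw c r b tau :
  Qb (mkw c r b tau) = BM (fun k => Pk k (fun i => c k i + b i) + r k + tau) + pen b.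
Proof. by []. Qed.

Lemma Qb_sub w w' : Qb (fun i => w i + w' i) <= Qb w + Qb w'.
Proof.
rewrite /Qb addrACA; apply: lerD.
  apply: BM_le => k ak.
  have h1 := BM_ge (term w) ak; have h2 := BM_ge (term w') ak.
  have h3 := PP_sub xs (hLk k) (fun i => w (inl (k, i)) + w (inr (inr (inl i))))
    (fun i => w' (inl (k, i)) + w' (inr (inr (inl i)))).
  have E : vadd (fun i => w (inl (k, i)) + w (inr (inr (inl i))))
      (fun i => w' (inl (k, i)) + w' (inr (inr (inl i)))) =
      (fun i => w (inl (k, i)) + w' (inl (k, i)) + (w (inr (inr (inl i))) + w' (inr (inr (inl i))))).
    by apply: funext => i; rewrite /vadd; ring.
  rewrite E in h3; apply: le_trans _ (lerD h1 h2); rewrite /term /Pk /=; move: h3; lra.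
rewrite /pen -mulrDr; apply: ler_wpM2l; first exact: M_ge0.
rewrite -big_split; apply: ler_sum => i _; exact: pn_sub.
Qed.

Lemma Qb_hom w (a : R) : 0 < a -> Qb (fun i => a * w i) = a * Qb w.
Proof.
move=> a0.
have ht : forall k, term (fun i => a * w i) k = a * term w k.
  move=> k; rewrite /term /Pk.
  have -> : (fun i => a * w (inl (k, i)) + a * w (inr (inr (inl i)))) =
    vscale a (fun i => w (inl (k, i)) + w (inr (inr (inl i)))).
    by apply: funext => i; rewrite /vscale mulrDr.
  by rewrite (PP_hom xs (hLk k)) // !mulrDr.
rewrite /Qb mulrDr; congr (_ + _).
  apply/eqP; rewrite eq_le; apply/andP; split.
    by apply: BM_le => k ak; rewrite ht ler_pM2l //; exact: BM_ge.
  rewrite -ler_pdivlMl //; apply: BM_le => k ak.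
  by rewrite ler_pdivlMl // -ht; exact: BM_ge.
rewrite /pen mulrCA; congr (_ * _); rewrite mulr_sumr; apply: eq_bigr => i _.
exact: pn_hom.
Qed.

Definition Sb (j : Tt) : bool := match j with inr (inr _) => true | _ => false end.
Definition lamb (j : Tt) : R := match j with inr (inr (inr _)) => 1 | _ => 0 end.

Lemma dotT_split (La w : Tt -> R) : dotT La w =
  \sum_k \sum_i La (inl (k, i)) * w (inl (k, i)) + \sum_k La (inr (inl k)) * w (inr (inl k))
  + \sum_i La (inr (inr (inl i))) * w (inr (inr (inl i)))
  + La (inr (inr (inr tt))) * w (inr (inr (inr tt))).
Proof.
rewrite /dotT big_sumType /= big_sumType /= pair_bigA /= -!addrA.
congr (_ + (_ + _)); first by apply: eq_bigr => -[a b].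
rewrite big_sumType /=; congr (_ + _); rewrite (bigD1 tt) //= big1 ?addr0 // => -[].
Qed.

Lemma HB_main : exists La : Tt -> R, (forall j, Sb j -> La j = lamb j) /\
  forall w, dotT La w <= Qb w.
Proof.
apply: HB; [exact: Qb_sub|exact: Qb_hom|].
move=> w hw; rewrite dotT_split /=.
rewrite big1 ?add0r; last by move=> k _; apply: big1 => i _; rewrite mul0r.
rewrite big1 ?add0r; last by move=> k _; rewrite mul0r.
rewrite big1 ?add0r; last by move=> i _; rewrite mul0r.
rewrite mul1r.
have [k [ak hk]] := pen_key (fun i => w (inr (inr (inl i)))).
have et : term w k = Pk k (fun i => w (inr (inr (inl i)))) + w (inr (inr (inr tt))).
  rewrite /term (hw (inr (inl k))) // addr0; congr (Pk k _ + _).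
  by apply: funext => i; rewrite hw // add0r.
have := BM_ge (term w) ak; rewrite et /Qb; move: hk; lra.
Qed.


Lemma Pk_zero k s : (forall i, s i = 0) -> Pk k s = 0.
Proof. by move=> hs; apply: (PP0 xs (hLk k)) => i _; exact: hs. Qed.

Lemma multipliers : exists (al : Kt -> 'I_n -> R) (mu : Kt -> R),
  [/\ forall k, 0 <= mu k,
      forall k, ~~ act k -> mu k = 0,
      \sum_k mu k = 1,
      forall k a, \sum_i al k i * a i <= mu k * Pk k a &
      forall s, Dc Iz l u xs s -> 0 <= \sum_k \sum_i al k i * s i].
Proof.
case: HB_main => La [hS hQ].
pose al k i := La (inl (k, i)); pose mu k := La (inr (inl k)).
have dm : forall c r b tau, dotT La (mkw c r b tau) =
    \sum_k \sum_i al k i * c k i + \sum_k mu k * r k + tau.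
  move=> c r b tau; rewrite dotT_split /=.
  rewrite (hS (inr (inr (inr tt)))) // mul1r.
  rewrite [X in _ + X + _]big1 ?addr0 // => i _.
  by rewrite (hS (inr (inr (inl i)))) // mul0r.
have E : forall c r b tau, dotT La (mkw c r b tau) <=
    BM (fun k => Pk k (fun i => c k i + b i) + r k + tau) + pen b.
  by move=> c r b tau; rewrite -Qb_mkw; exact: hQ.
have z0 : forall k, \sum_i al k i * (fun _ : 'I_n => 0) i = 0.
  by move=> k; apply: big1 => i _; rewrite mulr0.
have pz : pen (fun _ => 0) = 0 by apply: pen_zero.
have Pz : forall k, Pk k (fun i => (fun _ _ => 0 : R) k i + (fun _ => 0 : R) i) = 0.
  by move=> k; apply: Pk_zero => i; rewrite addr0.
exists al, mu; split.
- move=> k; have := E (fun _ _ => 0) (fun k' => if k' == k then -1 else 0) (fun _ => 0) 0.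
  rewrite dm sum_delta pz big1 ?add0r; last by move=> k' _; exact: (z0 k').
  set B := BM _ => h.
  have : B <= 0.
    rewrite /B; apply: BM_le => k' _; rewrite Pk_zero => [|i]; last by rewrite /= ?addr0.
    case: eqP => _; lra.
  lra.
- move=> k nk; apply/eqP; rewrite eq_le; apply/andP; split; last first.
    have := E (fun _ _ => 0) (fun k' => if k' == k then -1 else 0) (fun _ => 0) 0.
    rewrite dm sum_delta pz big1 ?add0r; last by move=> k' _; exact: (z0 k').
    set B := BM _ => h.
    have : B <= 0.
      rewrite /B; apply: BM_le => k' _; rewrite Pk_zero => [|i]; last by rewrite /= ?addr0.
      case: eqP => _; lra.
    lra.
  have := E (fun _ _ => 0) (fun k' => if k' == k then 1 else 0) (fun _ => 0) 0.
  rewrite dm sum_delta pz big1 ?add0r; last by move=> k' _; exact: (z0 k').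
  set B := BM _ => h.
  have : B <= 0.
    rewrite /B; apply: BM_le => k' ak'; rewrite Pk_zero => [|i]; last by rewrite /= ?addr0.
    case: eqP => [e|_]; last by lra.
    by move: nk; rewrite -e ak'.
  lra.
- apply/eqP; rewrite eq_le; apply/andP; split.
    have := E (fun _ _ => 0) (fun _ => 1) (fun _ => 0) (-1).
    rewrite dm pz big1 ?add0r; last by move=> k' _; exact: (z0 k').
    set B := BM _ => h.
    have : B <= 0.
      rewrite /B; apply: BM_le => k' _; rewrite Pk_zero => [|i]; last by rewrite /= ?addr0.
      lra.
    move: h; under eq_bigr do rewrite mulr1.
    lra.
  have := E (fun _ _ => 0) (fun _ => -1) (fun _ => 0) 1.
  rewrite dm pz big1 ?add0r; last by move=> k' _; exact: (z0 k').
  set B := BM _ => h.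
  have : B <= 0.
    rewrite /B; apply: BM_le => k' _; rewrite Pk_zero => [|i]; last by rewrite /= ?addr0.
    lra.
  move: h; under eq_bigr do rewrite mulrN1.
  rewrite sumrN; lra.
- move=> k a.
  have := E (fun k' i => if k' == k then a i else 0)
    (fun k' => if k' == k then - Pk k a else 0) (fun _ => 0) 0.
  have Z : \sum_(k' | k' != k) \sum_i al k' i * (if k' == k then a i else 0) = 0.
    by apply: big1 => k' /negbTE nk; apply: big1 => i _; rewrite nk mulr0.
  rewrite dm sum_delta pz (bigD1 k) //= Z addr0.
  set B := BM _ => h.
  have : B <= 0.
    rewrite /B; apply: BM_le => k' _; case: eqP => [->|_].
      have -> : (fun i => a i + 0) = a by apply: funext => i; rewrite addr0.
      lra.
    rewrite Pk_zero => [|i]; last by rewrite /= ?addr0.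
    lra.
  move: h; under eq_bigr do rewrite eqxx.
  lra.
- move=> s hs.
  have := E (fun _ i => - s i) (fun _ => 0) s 0.
  have Z0 : \sum_k mu k * (fun _ => 0 : R) k = 0 by apply: big1 => k _; rewrite mulr0.
  rewrite dm (pen_Dc hs) Z0.
  set B := BM _ => h.
  have : B <= 0.
    rewrite /B; apply: BM_le => k' _; rewrite Pk_zero => [|i]; last by rewrite /= addNr.
    lra.
  have E2 : \sum_k \sum_i al k i * (fun _ i => - s i) k i = - \sum_k \sum_i al k i * s i.
    rewrite -sumrN; apply: eq_bigr => k _; rewrite -sumrN; apply: eq_bigr => i _.
    by rewrite mulrN.
  move: h; rewrite E2; lra.
Qed.


Lemma sub_ne k : exists v, gen_grad_c Iz (hk k) xs v.
Proof.
have [La [_ H]] := @HB R _ (Pk k) (fun w w' => PP_sub xs (hLk k) w w')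
  (fun w a a0 => PP_hom xs (hLk k) w a0) pred0 (fun _ => 0)
  (fun w hw => ltac:(rewrite /dotT big1 ?Pk_zero // => i; rewrite ?mul0r //; by rewrite hw)).
by exists La; apply: (PP_dom (xs:=xs) (hLk k)) => s; exact: H.
Qed.

Lemma stationary :
  (exists d, Dc Iz l u xs d /\
     forall j, g j xs = 0 ->
       forall xi, gen_grad_c Iz (g j) xs xi -> vdot xi d < 0) ->
  pareto_clarke_stationary Iz l u F g xs.
Proof.
move=> hCQ.
have [al [mu [mu0 muin mu1 alb alD]]] := multipliers.
have [xi0 hxi0] := fin_all_exists sub_ne.
pose vv k := if 0 < mu k then (fun i => al k i / mu k) else xi0 k.
have alz : forall k, mu k = 0 -> forall i, al k i = 0.
  move=> k m0 i.
  have h1 := alb k (fun i' => if i' == i then 1 else 0).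
  have h2 := alb k (fun i' => if i' == i then -1 else 0).
  rewrite !sum_delta m0 !mul0r in h1 h2; move: h1 h2; lra.
have mvv : forall k i, mu k * vv k i = al k i.
  move=> k i; rewrite /vv; case: ifP => hp; first by rewrite mulrCA divff ?gt_eqF // mulr1.
  have m0 : mu k = 0 by apply/eqP; rewrite eq_le mu0 andbT leNgt hp.
  by rewrite m0 mul0r alz.
have ggv : forall k, gen_grad_c Iz (hk k) xs (vv k).
  move=> k; rewrite /vv; case: ifP => hp; last exact: hxi0.
  apply: (PP_dom (xs:=xs) (hLk k)) => s.
  have -> : \sum_i al k i / mu k * s i = (\sum_i al k i * s i) / mu k.
    by rewrite mulr_suml; apply: eq_bigr => i _; rewrite mulrAC.
  by rewrite ler_pdivrMr // mulrC; exact: alb.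
split; first exact: hfx.
exists (fun i => mu (inl i)), (fun j => mu (inr j)); split.
- by move=> i; exact: mu0.
- move=> hs.
  have ms : forall i, mu (inl i) = 0 by move=> i; have := congr1 (fun f => f i) hs.
  have [d0 [hd0 hcq]] := hCQ.
  have A := alD d0 hd0; rewrite big_sumType /= big1 ?add0r in A; last first.
    by move=> i _; apply: big1 => i' _; rewrite alz ?mul0r.
  rewrite big_sumType /= big1 ?add0r in mu1; last by move=> i _; exact: ms.
  have A' : \sum_j \sum_i al (inr j) i * d0 i = \sum_j mu (inr j) * vdot (vv (inr j)) d0.
    apply: eq_bigr => j _; rewrite /vdot mulr_sumr; apply: eq_bigr => i _.
    by rewrite mulrA mvv.
  rewrite A' in A.
  have [j0 hj0] : exists j, mu (inr j) != 0.
    apply: contrapT => hn; move: mu1; rewrite big1 => [|j _].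
      by move/eqP; rewrite eq_sym oner_eq0.
    by apply/eqP; apply: contrapT => hj; apply: hn; exists j; apply/negP.
  have aj : act (inr j0) by apply: contraNT hj0 => /muin ->.
  have mp : 0 < mu (inr j0) by rewrite lt_neqAle eq_sym hj0 mu0.
  have v0 := hcq j0 (eqP aj) _ (ggv (inr j0)).
  move: A; rewrite (bigD1 j0) //=.
  have : \sum_(j | j != j0) mu (inr j) * vdot (vv (inr j)) d0 <= 0.
    apply: sumr_le0 => j _; case: (boolP (act (inr j))) => ajj; last by rewrite muin // mul0r.
    apply: mulr_ge0_le0; first exact: mu0.
    exact: ltW (hcq j (eqP ajj) _ (ggv (inr j))).
  have : mu (inr j0) * vdot (vv (inr j0)) d0 < 0 by rewrite pmulr_rlt0.
  lra.
- move=> j; split; first exact: mu0.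
  case: (boolP (act (inr j))) => aj; first by rewrite (eqP aj) mulr0.
  by rewrite muin // mul0r.
exists (fun i => vv (inl i)), (fun j => vv (inr j)); split.
- move=> i; exact: (ggv (inl i)).
- move=> j; exact: (ggv (inr j)).
move=> xi d hd; apply: le_trans (alD d hd) _; rewrite le_eqVlt; apply/orP; left; apply/eqP.
rewrite /vdot exchange_big /=; apply: eq_bigr => i _.
rewrite big_sumType /= mulrDl !mulr_suml; congr (_ + _); apply: eq_bigr => k _;
  by rewrite mvv.
Qed.

End Main.


End Aux.

Theorem mainTheorem1 (R : realType) (n q m : nat) (Iz : {set 'I_n})
  (l u : 'I_n -> R) (F : 'I_q -> ('I_n -> R) -> R) (g : 'I_m -> ('I_n -> R) -> R)
  (xs : 'I_n -> R) :
  (0 < q)%N ->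
  Iz != set0 -> ~: Iz != set0 ->
  (forall i, l i < u i) ->
  (forall i, i \in Iz -> exists a b : int, l i = a%:~R /\ u i = b%:~R) ->
  (forall i, lipschitz_c Iz (F i)) ->
  (forall j, lipschitz_c Iz (g j)) ->
  local_pareto_opt Iz l u F g xs ->
  (exists d, Dc Iz l u xs d /\
     forall j, g j xs = 0 ->
       forall xi, gen_grad_c Iz (g j) xs xi -> vdot xi d < 0) ->
  pareto_stationary Iz l u F g xs.
Proof.
move=> q0 _ _ hlu _ hF hg [hfx hnd hloc] hCQ.
have [Lk hLk] : exists Lk : ('I_q + 'I_m)%type -> R, forall k : ('I_q + 'I_m)%type, 0 <= Lk k /\
    forall x y, same_z Iz x y -> `|Aux.hk F g k x - Aux.hk F g k y| <= Lk k * vnorm (vsub x y).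
  apply: (@fin_all_exists _ (fun _ => R) (fun k L => 0 <= L /\ forall x y, same_z Iz x y ->
    `|Aux.hk F g k x - Aux.hk F g k y| <= L * vnorm (vsub x y))) => -[i|j]; [have [L HL] := hF i | have [L HL] := hg j];
    exists `|L|; split => // x y hxy; apply: le_trans (HL x y hxy) _;
    (apply: ler_wpM2r; [exact: Aux.vnorm_ge0 | exact: ler_norm]).
split; last exact: hnd.
exact: (Aux.stationary q0 hlu (fun k => (hLk k).1) (fun k => (hLk k).2) hfx hloc hCQ).
Qed.
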